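(* Let $n\ge 1$. Under the restriction map $H^\bullet(\Gamma_{n+1};\mathbb{Q}_{\mathrm{sgn}})\to H^\bullet(\Gamma_n;\mathbb{Q}_{\mathrm{sgn}})$ induced by the natural inclusion $\Gamma_n\hookrightarrow\Gamma_{n+1}$: if $\mathcal D\in\mathcal D^{\mathrm{sgn}}_{n+1}$ has exactly one isolated vertex, then $\alpha^{\mathrm{sgn}}_{\mathcal D}$ restricts to $\alpha^{\mathrm{sgn}}_{\mathcal D'}$, where $\mathcal D'\in\mathcal D^{\mathrm{sgn}}_n$ is obtained by deleting the isolated vertex; if $\mathcal D$ has no isolated vertex, $\alpha^{\mathrm{sgn}}_{\mathcal D}$ restricts to $0$. In particular the restriction map is injective on the subspace spanned by the classes $\alpha^{\mathrm{sgn}}_{\mathcal D}$ with $\mathcal D$ having exactly one isolated vertex.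
   Context: $\Gamma_n=\mathrm{Br}_n/[P_n,P_n]$, $\mathbb{Z}\mathcal A_n=P_n/[P_n,P_n]$. $\mathbb{Q}_{\mathrm{sgn}}$ is the sign representation of $S_n$ viewed as a $\Gamma_n$-module; $H^\bullet(\Gamma_n;\mathbb{Q}_{\mathrm{sgn}})$ is identified via restriction with $H^\bullet(\mathbb{Z}\mathcal A_n;\mathbb{Q}_{\mathrm{sgn}})^{S_n}$, and $H^\bullet(\mathbb{Z}\mathcal A_n;\mathbb{Q}_{\mathrm{sgn}})=\mathbb{Q}_{\mathrm{sgn}}\otimes\Lambda^\bullet$ where $\Lambda^\bullet$ is the exterior algebra on $\omega_{ij}$ ($1\le i<j\le n$) with $\sigma(\omega_{ij})=\omega_{\sigma(i)\sigma(j)}$ if $\sigma(i)<\sigma(j)$, $\omega_{\sigma(j)\sigma(i)}$ otherwise. The inclusion $\Gamma_n\hookrightarrow\Gamma_{n+1}$ comes from adding a strand; restriction sends $\omega_{ij}$ ($j\le n$) to $\omega_{ij}$ and $\omega_{i,n+1}$ to $0$. For a simple graph $\Delta$ on $\{1,\dots,n\}$ with lexicographically ordered edges $(i_1,j_1),\dots,(i_k,j_k)$, $\mu_\Delta=\omega_{i_1j_1}\cdots\omega_{i_kj_k}$. A graph with $n$ vertices is skew-invariant if every automorphism $\sigma$ satisfies $\mathrm{sgn}(\sigma)\mathrm{sgn}_\Delta(\sigma)=1$, with $\mathrm{sgn}(\sigma)$ the sign on vertices and $\mathrm{sgn}_\Delta(\sigma)$ the sign of the induced edge permutation; $\mathcal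 D^{\mathrm{sgn}}_n$ is the set of their isomorphism classes. Representatives are chosen coherently: for each class $\mathcal G_0$ without isolated vertices a representative on $\{1,\dots,|V\mathcal G_0|\}$ is fixed, and the representative $\Delta_{\mathcal D}$ of a class on $n$ vertices with non-isolated part $\mathcal G_0$ adds vertices $|V\mathcal G_0|+1,\dots,n$ as isolated vertices. $\alpha^{\mathrm{sgn}}_{\mathcal D}=\frac{1}{|\mathrm{Stab}_{S_n}(\Delta_{\mathcal D})|}\sum_{\sigma\in S_n}\sigma(\mu_{\Delta_{\mathcal D}})$ computed in $H^\bullet(\mathbb{Z}\mathcal A_n;\mathbb{Q}_{\mathrm{sgn}})$; these classes for $\mathcal D\in\mathcal D^{\mathrm{sgn}}_n$ form a basis of $H^\bullet(\Gamma_n;\mathbb{Q}_{\mathrm{sgn}})$. *)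

(* Defs.v *)
From HB Require Import structures.
From mathcomp Require Import all_boot all_order all_algebra all_fingroup.
Set Implicit Arguments. Unset Strict Implicit. Unset Printing Implicit Defensive.
Import Order.TTheory GRing.Theory Num.Theory.
Local Open Scope ring_scope.

(* Vertices {1,..,n} are modelled by 'I_n = {0,..,n-1}.  A (normalized) edge
   is a pair (i,j) with i < j, standing for omega_{ij}. *)
Definition edge (n : nat) := ('I_n * 'I_n)%type.

Definition graph (n : nat) := {set edge n}.
Definition wf_graph n (G : graph n) : bool :=
  [forall e in G, (e.1 < e.2)%N].

Definition ltE n (a b : edge n) : bool :=
  ((a.1 < b.1)%N || ((a.1 == b.1) && (a.2 < b.2)%N)).
Definition leE n (a b : edge n) : bool := ~~ ltE b a.

Definition sorted_edges n (G : graph n) : seq (edge n) := sort (@leE n) (enum G).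

Fixpoint inv_count n (s : seq (edge n)) : nat :=
  match s with
  | [::] => 0
  | x :: s' => (count (fun y => ltE y x) s' + inv_count s')%N
  end.

(* The exterior algebra Lambda^* on the omega_{ij}: the rational vector space
   with basis the monomials omega_S (S a set of normalized edges, product taken
   in lexicographic order). *)
Notation Lambda n := {ffun {set edge n} -> rat^o}.
Definition basisL n (S : {set edge n}) : Lambda n := [ffun T => (T == S)%:R].

(* the product omega_{e_1} ... omega_{e_k} of a sequence of normalized edges *)
Definition wedge n (s : seq (edge n)) : Lambda n :=
  if uniq s then (-1) ^+ inv_count s *: basisL [set x in s] else 0.

Definition mu n (G : graph n) : Lambda n := wedge (sorted_edges G).

Definition act_edge n (s : 'S_n) (e : edge n) : edge n :=
  if (s e.1 < s e.2)%N then (s e.1, s e.2) else (s e.2, s e.1).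

(* action of sigma on Q_sgn (x) Lambda: sgn(sigma) times the algebra
   automorphism induced on Lambda *)
Definition actL n (s : 'S_n) (x : Lambda n) : Lambda n :=
  \sum_(S : {set edge n}) x S *: wedge (map (act_edge s) (sorted_edges S)).
Definition act_sgn n (s : 'S_n) (x : Lambda n) : Lambda n :=
  (-1) ^+ odd_perm s *: actL s x.

Definition Stab n (G : graph n) : {set 'S_n} :=
  [set s : 'S_n | [set act_edge s e | e in G] == G].

Definition edge_sign n (G : graph n) (s : 'S_n) : int :=
  (-1) ^+ inv_count (map (act_edge s) (sorted_edges G)).

Definition skew_invariant n (G : graph n) : bool :=
  [forall s in Stab G, ((-1) ^+ odd_perm s * edge_sign G s == 1 :> int)].

Definition alpha n (G : graph n) : Lambda n :=
  (#|Stab G|%:R)^-1 *: \sum_(s : 'S_n) act_sgn s (mu G).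

Definition isolated n (G : graph n) (v : 'I_n) : bool :=
  [forall e in G, (e.1 != v) && (e.2 != v)].

Definition wid n (i : 'I_n) : 'I_n.+1 := widen_ord (leqnSn n) i.
Definition wid_edge n (e : edge n) : edge n.+1 := (wid e.1, wid e.2).

(* restriction Lambda_{n+1} -> Lambda_n: omega_{ij} |-> omega_{ij} for j <= n,
   omega_{i,n+1} |-> 0; on monomials omega_T |-> omega_S if T = S (widened),
   0 if T involves the last vertex *)
Definition res n (x : Lambda n.+1) : Lambda n :=
  [ffun S : {set edge n} => x [set wid_edge e | e in S]].

Definition del_last n (G : graph n.+1) : graph n :=
  [set e : edge n | wid_edge e \in G].

(* Main.v *)
Require Import Defs.
From HB Require Import structures.
From mathcomp Require Import all_boot all_order all_algebra all_fingroup.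
From mathcomp Require Import zify ring.
Set Implicit Arguments. Unset Strict Implicit. Unset Printing Implicit Defensive.
Import Order.TTheory GRing.Theory Num.Theory.
Local Open Scope ring_scope.
Section Parity.
Variable T : eqType.
Fixpoint invr (r : rel T) (s : seq T) : nat :=
  match s with [::] => 0 | x :: s' => (count (fun y => r y x) s' + invr r s')%N end.
Variables r1 r2 : rel T.
Definition Dv s := (invr r1 s + invr r2 s)%N.
Definition sc x u := (count (fun y => r1 y x) u + count (fun y => r2 y x) u)%N.
Definition sc' x u := (count (fun y => r1 x y) u + count (fun y => r2 x y) u)%N.

Lemma Dv_cons x u : Dv (x :: u) = (sc x u + Dv u)%N.
Proof. rewrite /Dv /sc /=; lia. Qed.

Lemma Dv_cat v1 x v2 : Dv (v1 ++ x :: v2) = (sc' x v1 + sc x v2 + Dv (v1 ++ v2))%N.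
Proof.
elim: v1 => [|a w IH] /=; first by rewrite Dv_cons /sc'.
rewrite !Dv_cons IH /sc /sc' !count_cat /=; lia.
Qed.

Lemma odd_sc x w : x \notin w ->
  (forall y, y \in w -> (r1 x y + r1 y x = 1)%N /\ (r2 x y + r2 y x = 1)%N) ->
  odd (sc' x w) = odd (sc x w).
Proof.
elim: w => [|a w IH] //= Hx H.
rewrite inE negb_or in Hx; case/andP: Hx => Hxa Hx.
have [H1 H2] := H a (mem_head _ _).
have HH : forall y, y \in w -> (r1 x y + r1 y x = 1)%N /\ (r2 x y + r2 y x = 1)%N.
  by move=> y Hy; apply: H; rewrite inE Hy orbT.
have := IH Hx HH.
have e1 : r1 a x = ~~ r1 x a by move: H1; case: (r1 x a); case: (r1 a x).
have e2 : r2 a x = ~~ r2 x a by move: H2; case: (r2 x a); case: (r2 a x).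
rewrite /sc /sc' /= !oddD !oddb e1 e2 => E.
rewrite addbACA E addbACA.
by case: (r1 x a); case: (r2 x a); case: (odd (count (r1^~ x) w)); case: (odd (count (r2^~ x) w)).
Qed.

Lemma parity u v : uniq u -> perm_eq u v ->
  (forall x y, x \in u -> y \in u -> x != y ->
     (r1 x y + r1 y x = 1)%N /\ (r2 x y + r2 y x = 1)%N) ->
  odd (Dv u) = odd (Dv v).
Proof.
elim: u v => [|x u IH] v Hu Hp H.
  by move: (perm_size Hp); case: v Hp.
have xv : x \in v by rewrite -(perm_mem Hp) mem_head.
case/splitPr: xv Hp => v1 v2 Hp.
have Hp' : perm_eq u (v1 ++ v2).
  by rewrite -(perm_cons x); apply: (perm_trans Hp); rewrite -cat1s perm_catCA.
have Hu' : uniq (v1 ++ x :: v2) by rewrite -(perm_uniq Hp).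
case/andP: Hu => xu Hu.
have IH' := IH _ Hu Hp'.
have {IH'}IH' : odd (Dv u) = odd (Dv (v1 ++ v2)).
  by apply: IH' => a b Ha Hb; apply: H; rewrite inE ?Ha ?Hb orbT.
have Hsc : sc x u = (sc x v1 + sc x v2)%N.
  by rewrite /sc !(seq.permP Hp') !count_cat; lia.
have xv1 : x \notin v1.
  by move: Hu'; rewrite cat_uniq /= negb_or => /and3P[_ /andP[Hx1 _] _].
have Ho : odd (sc' x v1) = odd (sc x v1).
  apply: odd_sc => // y Hy; apply: H; first exact: mem_head.
    by rewrite inE (perm_mem Hp') mem_cat Hy orbT.
  by apply: contraNneq xv1 => ->.
rewrite Dv_cons Dv_cat Hsc.
have odd3 : forall a a' b c c', odd a = odd a' -> odd c = odd c' ->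
  odd (a + b + c) = odd (a' + b + c') by move=> a a' b c c'; rewrite !oddD => -> ->.
by apply: odd3.
Qed.
End Parity.
Section Edges.
Variable m : nat.
Implicit Types (a b e : edge m) (G E : graph m).

Definition key (e : edge m) : nat := (e.1 * m + e.2)%N.

Lemma ltE_key a b : ltE a b = (key a < key b)%N.
Proof.
rewrite /ltE /key -val_eqE /=.
have := ltn_ord a.2; have := ltn_ord b.2.
move: (nat_of_ord a.1) (nat_of_ord a.2) (nat_of_ord b.1) (nat_of_ord b.2) => x1 x2 y1 y2 h1 h2.
case: (ltngtP x1 y1) => h /=.
- by symmetry; apply/idP; nia.
- by symmetry; apply/negbTE; rewrite -leqNgt; nia.
- by subst; rewrite ltn_add2l.
Qed.

Lemma key_inj : injective key.
Proof.
move=> a b; rewrite /key => E.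
have hm : (0 < m)%N by have := ltn_ord a.2; lia.
have E1 : (nat_of_ord a.1 = b.1)%N.
  by have := congr1 (fun k => k %/ m)%N E; rewrite !divnMDl // !divn_small ?ltn_ord // !addn0.
have E2 : (nat_of_ord a.2 = b.2)%N.
  by have := congr1 (fun k => k %% m)%N E; rewrite !modnMDl !modn_small ?ltn_ord.
by case: a b E1 E2 {E} => [a1 a2] [b1 b2] /= /val_inj -> /val_inj ->.
Qed.

Lemma ltE_tot a b : a != b -> (ltE a b + ltE b a = 1)%N.
Proof.
move=> ne; rewrite !ltE_key.
have : key a != key b by apply: contra ne => /eqP/key_inj ->.
move: (key a) (key b) => x y; case: (ltngtP x y) => //= h _.
Qed.

Lemma inv_count_invr s : inv_count s = invr (@ltE m) s.
Proof. by elim: s => //= x s ->. Qed.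

Definition normal e := (e.1 < e.2)%N.

Lemma leE_trans : transitive (@leE m).
Proof. move=> b a c; rewrite /leE !ltE_key -!leqNgt; exact: leq_trans. Qed.

Lemma leE_total : total (@leE m).
Proof. move=> a b; rewrite /leE !ltE_key -!leqNgt; exact: leq_total. Qed.

Lemma sorted_edgesE G : sorted_edges G =i G.
Proof. by move=> e; rewrite /sorted_edges mem_sort mem_enum. Qed.

Lemma sorted_edges_uniq G : uniq (sorted_edges G).
Proof. by rewrite /sorted_edges sort_uniq enum_uniq. Qed.

Lemma inv_sorted G : inv_count (sorted_edges G) = 0%N.
Proof.
have : pairwise (@leE m) (sorted_edges G).
  by rewrite -(sorted_pairwise leE_trans) /sorted_edges sort_sorted //; exact: leE_total.
elim: (sorted_edges G) => //= x s IH /andP[Hx Hs].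
rewrite IH // addn0; apply/eqP; rewrite -leqn0 leqNgt -has_count.
apply/hasP => [[y Hy]]; move/allP: Hx => /(_ y Hy).
by rewrite /leE => /negbTE ->.
Qed.

Lemma mu_basis G : mu G = basisL G.
Proof.
rewrite /mu /wedge sorted_edges_uniq inv_sorted expr0 scale1r; congr basisL.
by apply/setP => e; rewrite inE sorted_edgesE.
Qed.

End Edges.
Section Act.
Variable m : nat.
Implicit Types (a b e : edge m) (G E A B : graph m) (s t : 'S_m).

Definition im s G : graph m := [set act_edge s e | e in G].

Lemma act_edge_normal s e : normal e -> normal (act_edge s e).
Proof.
rewrite /normal /act_edge => h; case: ifP => //= h'.
have ne : s e.1 != s e.2.
  by rewrite (inj_eq perm_inj); apply: contraTneq h => ->; rewrite ltnn.
by move: h' ne; rewrite -val_eqE /=; case: ltngtP.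
Qed.

Lemma act_edge_inj s a b : normal a -> normal b ->
  act_edge s a = act_edge s b -> a = b.
Proof.
case: a b => [a1 a2] [b1 b2]; rewrite /normal /act_edge /= => ha hb.
case: ifP => _; case: ifP => _ [/perm_inj E1 /perm_inj E2]; subst => //;
  by move: ha hb; case: ltngtP.
Qed.

Definition nrm (x y : 'I_m) : edge m := if (x < y)%N then (x, y) else (y, x).

Lemma nrm_sym x y : nrm x y = nrm y x.
Proof.
rewrite /nrm; case: ltngtP => h //; by have -> : x = y by apply: val_inj.
Qed.

Lemma act_nrm s e : act_edge s e = nrm (s e.1) (s e.2).
Proof. by []. Qed.

Lemma act_edgeM s t e : act_edge (s * t) e = act_edge t (act_edge s e).
Proof.
rewrite [LHS]act_nrm !permM [act_edge s e]act_nrm {2}/nrm.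
by case: ifP => _; rewrite act_nrm //= nrm_sym.
Qed.

Lemma wfP G : wf_graph G -> forall e, e \in G -> normal e.
Proof. by move/forallP => H e He; have := H e; rewrite He. Qed.

Lemma wfI G : (forall e, e \in G -> normal e) -> wf_graph G.
Proof. by move=> H; apply/forallP => e; apply/implyP => /H. Qed.

Lemma act_edge1 e : normal e -> act_edge 1 e = e.
Proof. by case: e => a b; rewrite act_nrm !perm1 /nrm /normal /= => ->. Qed.

Lemma wf_im s G : wf_graph G -> wf_graph (im s G).
Proof.
move=> H; apply: wfI => e' /imsetP [e He ->]; apply: act_edge_normal; exact: wfP He.
Qed.

Lemma imM s t G : im (s * t) G = im t (im s G).
Proof. rewrite /im -imset_comp; apply: eq_imset => e; exact: act_edgeM. Qed.

Lemma im1 G : wf_graph G -> im 1 G = G.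
Proof.
move=> H; apply/setP => e; apply/imsetP/idP => [[e' He' ->]|He].
  by rewrite act_edge1 //; exact: wfP He'.
by exists e => //; rewrite act_edge1 //; exact: wfP He.
Qed.

Lemma im_inv s G : wf_graph G -> im (s^-1)%g (im s G) = G.
Proof. by move=> H; rewrite -imM mulgV im1. Qed.

Lemma im_injw s A B : wf_graph A -> wf_graph B -> im s A = im s B -> A = B.
Proof. by move=> HA HB E; rewrite -(im_inv s HA) E im_inv. Qed.

Lemma map_act_uniq s G : wf_graph G -> uniq (map (act_edge s) (sorted_edges G)).
Proof.
move=> H; rewrite map_inj_in_uniq ?sorted_edges_uniq // => a b Ha Hb.
by apply: act_edge_inj; apply: (wfP H); rewrite -sorted_edgesE.
Qed.

Lemma map_act_mem s G : map (act_edge s) (sorted_edges G) =i im s G.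
Proof.
move=> e; apply/mapP/imsetP => [[x Hx ->]|[x Hx ->]]; exists x => //;
  by rewrite ?sorted_edgesE in Hx *.
Qed.

Lemma wedge_act s G : wf_graph G ->
  wedge (map (act_edge s) (sorted_edges G)) =
  (-1) ^+ inv_count (map (act_edge s) (sorted_edges G)) *: basisL (im s G).
Proof.
move=> H; rewrite /wedge map_act_uniq //; congr (_ *: basisL _).
by apply/setP => e; rewrite inE map_act_mem.
Qed.

Lemma iso_fw s G w : isolated G w -> isolated (im s G) (s w).
Proof.
move/forallP => H; apply/forallP => e'; apply/implyP => /imsetP [e He ->].
move: (H e); rewrite He /= => /andP [h1 h2].
have h1' : s e.1 != s w by rewrite (inj_eq perm_inj).
have h2' : s e.2 != s w by rewrite (inj_eq perm_inj).
by rewrite act_nrm /nrm; case: ifP => _ /=; rewrite h1' h2'.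
Qed.

Lemma iso_bw s G w : isolated (im s G) w -> isolated G ((s^-1)%g w).
Proof.
move=> H; have := iso_fw (s^-1)%g H; rewrite -imM mulgV.
move/forallP => H2; apply/forallP => e; apply/implyP => He.
have := H2 (act_edge 1 e); rewrite (imset_f _ He) /=.
by rewrite act_nrm !perm1 /nrm; case: ifP => _ /= /andP[-> ->].
Qed.

End Act.
Lemma scaleQ (a b : rat) : a *: (b : rat^o) = a * b. Proof. by []. Qed.

Section Alpha.
Variable m : nat.
Implicit Types (G E : graph m) (s t : 'S_m).

Definition sg s G : rat :=
  (-1) ^+ odd_perm s * (-1) ^+ inv_count (map (act_edge s) (sorted_edges G)).

Lemma actL_basis s G : actL s (basisL G) = wedge (map (act_edge s) (sorted_edges G)).
Proof.
rewrite /actL (bigD1 G) //= big1 => [|S /negbTE nS]; last by rewrite ffunE nS scale0r.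
by rewrite ffunE eqxx scale1r addr0.
Qed.

Lemma alpha_coef G E : wf_graph G ->
  alpha G E = (#|Stab G|%:R)^-1 * \sum_(s | im s G == E) sg s G.
Proof.
move=> H; rewrite /alpha !ffunE sum_ffunE [in RHS]big_mkcond /=; congr (_ * _).

apply: eq_bigr => s _; rewrite /act_sgn mu_basis actL_basis wedge_act // !ffunE.
rewrite /sg eq_sym !scaleQ; case: (im s G == E); by rewrite ?mulr1 ?mulr0.
Qed.

End Alpha.
Lemma invr_map (T U : eqType) (r : rel U) (g : T -> U) s :
  invr r (map g s) = invr (fun a b => r (g a) (g b)) s.
Proof. by elim: s => //= x s ->; rewrite count_map. Qed.

Section Flip.
Variable m : nat.
Implicit Types (G E : graph m) (s t : 'S_m).

Lemma parity_act t (u : seq (edge m)) E : wf_graph E -> uniq u ->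
  perm_eq u (sorted_edges E) ->
  odd (inv_count (map (act_edge t) u)) =
  odd (inv_count u) (+) odd (inv_count (map (act_edge t) (sorted_edges E))).
Proof.
move=> HE Hu Hp.
have := @parity _ (@ltE m) (fun a b => ltE (act_edge t a) (act_edge t b)) _ _ Hu Hp.
rewrite /Dv -!inv_count_invr -!invr_map -!inv_count_invr inv_sorted add0n.
have Hn : forall x, x \in u -> normal x.
  by move=> x Hx; apply: (wfP HE); rewrite -sorted_edgesE -(perm_mem Hp).
move=> /(_ _) H; rewrite oddD in H; rewrite -H; last first.
  move=> x y Hx Hy ne; split; first exact: ltE_tot.
  apply: ltE_tot; apply: contra ne => /eqP /act_edge_inj -> //; exact: Hn.
by rewrite addbA addbb.
Qed.

Lemma alpha_flip G E t : wf_graph G -> wf_graph E ->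
  alpha G (im t E) =
  (-1) ^+ (odd_perm t (+) odd (inv_count (map (act_edge t) (sorted_edges E)))) * alpha G E.
Proof.
move=> HG HE; rewrite !alpha_coef // mulrCA; congr (_ * _); rewrite big_distrr /=.
rewrite (reindex_inj (mulIg t)) /=.
apply: eq_big => s.
  rewrite imM; apply/eqP/eqP => [/im_injw -> //|-> //]; exact: wf_im.
move=> /eqP; rewrite imM => /im_injw Hs; have {Hs} Hs := Hs (wf_im s HG) HE.
have Hp : perm_eq (map (act_edge s) (sorted_edges G)) (sorted_edges E).
  apply: uniq_perm; rewrite ?map_act_uniq ?sorted_edges_uniq //.
  by move=> e; rewrite map_act_mem Hs sorted_edgesE.
rewrite /sg odd_permM.
have -> : map (act_edge (s * t)) (sorted_edges G) =
          map (act_edge t) (map (act_edge s) (sorted_edges G)).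
  by rewrite -map_comp; apply: eq_map => e; rewrite act_edgeM.
rewrite -[(-1) ^+ inv_count (map (act_edge t) _)]signr_odd (parity_act t HE (map_act_uniq s HG) Hp).
rewrite -[(-1) ^+ inv_count (map (act_edge s) _)]signr_odd.
move: (odd_perm s) (odd_perm t) (odd (inv_count (map (act_edge s) _))) (odd (inv_count (map (act_edge t) (sorted_edges E)))) => a b c d.
rewrite !signr_addb; ring.
Qed.

End Flip.
Section Lift.
Variable n : nat.
Implicit Types (s : 'S_n) (G T : graph n).

Definition L s : 'S_n.+1 := lift_perm ord_max ord_max s.

Lemma lift_max_wid (k : 'I_n) : lift ord_max k = wid k.
Proof. by apply: val_inj; rewrite /= /bump leqNgt ltn_ord. Qed.

Lemma L_wid s k : L s (wid k) = wid (s k).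
Proof. by rewrite /L -!lift_max_wid lift_perm_lift. Qed.

Lemma L_max s : L s ord_max = ord_max.
Proof. exact: lift_perm_id. Qed.

Lemma act_L s e : act_edge (L s) (wid_edge e) = wid_edge (act_edge s e).
Proof. by rewrite !act_nrm /= !L_wid /nrm /=; case: ifP. Qed.

Lemma wid_edge_inj : injective (@wid_edge n).
Proof.
by case=> [a1 a2] [b1 b2] [E1 E2]; congr pair; apply: val_inj.
Qed.

Lemma im_L s G : im (L s) (@wid_edge n @: G) = @wid_edge n @: (im s G).
Proof. by rewrite /im -!imset_comp; apply: eq_imset => e /=; rewrite act_L. Qed.

Lemma wid_max (k : 'I_n) : wid k != ord_max.
Proof. by rewrite -val_eqE /= neq_ltn ltn_ord. Qed.

Lemma iso_wid_max T : isolated (@wid_edge n @: T) ord_max.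
Proof.
by apply/forallP => e; apply/implyP => /imsetP [e' _ ->] /=; rewrite !wid_max.
Qed.

Lemma inv_wid l : inv_count (map (@wid_edge n) l) = inv_count l.
Proof. by elim: l => //= x l ->; rewrite count_map. Qed.

Lemma wf_wid G : wf_graph (@wid_edge n @: G) -> wf_graph G.
Proof.
move=> H; apply: wfI => e He; have := wfP H (imset_f (@wid_edge n) He); by [].
Qed.

Lemma odd_L s : odd_perm (L s) = odd_perm s.
Proof. by rewrite /L odd_lift_perm addbb. Qed.

Lemma sum_L (F : 'S_n.+1 -> rat) G T :
  (forall v, isolated (@wid_edge n @: G) v -> v = ord_max) ->
  \sum_(σ | im σ (@wid_edge n @: G) == @wid_edge n @: T) F σ =
  \sum_(s : 'S_n | im s G == T) F (L s).
Proof.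
move=> Hu.
rewrite (eq_bigl (fun σ : 'S_n.+1 => (σ ord_max == ord_max) && (im σ (@wid_edge n @: G) == @wid_edge n @: T))); last first.
  move=> σ; case: eqP => H; rewrite ?andbF ?andbT //; apply/esym/eqP.
  have := iso_wid_max T; rewrite -H => /iso_bw /Hu E.
  by rewrite -{1}E permKV.
rewrite (reindex L); last first.
  pose ulsf i (s : 'S_n.+1) k := odflt k (unlift (s i) (s (lift i k))).
  have ulsfK i (s : 'S_n.+1) k: lift (s i) (ulsf i s k) = s (lift i k).
    rewrite /ulsf; have:= neq_lift i k.
    by rewrite -(can_eq (permK s)) => /unlift_some[] ? ? ->.
  have inj_ulsf: injective (ulsf ord_max _).
    move=> s; apply: can_inj (ulsf (s ord_max) s^-1%g) _ => k'.
    by rewrite {1}/ulsf ulsfK !permK liftK.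
  exists (fun s : 'S_n.+1 => (perm (inj_ulsf s) : 'S_n)) => [s _ | s].
    by apply/permP=> k'; rewrite permE /ulsf /L lift_perm_lift lift_perm_id liftK.
  case/andP => /eqP si0 _; apply/permP=> k.
  case: (unliftP ord_max k) => [k'|] ->; rewrite /L ?lift_perm_id //.
  by rewrite lift_perm_lift permE -{1}si0 ulsfK.
apply: eq_bigl => s; rewrite L_max eqxx im_L /=.
by apply/eqP/eqP => [/(imset_inj wid_edge_inj)|->].
Qed.

End Lift.
Section Part2.
Variable n : nat.
Implicit Types (s : 'S_n) (G T : graph n).

Lemma sg_L s G : wf_graph (@wid_edge n @: G) -> sg (L s) (@wid_edge n @: G) = sg s G.
Proof.
move=> H; rewrite /sg odd_L; congr (_ * _).
rewrite -signr_odd -[RHS]signr_odd; congr (_ ^+ _).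
have Hu : uniq (map (@wid_edge n) (sorted_edges G)).
  by rewrite map_inj_uniq ?sorted_edges_uniq //; exact: wid_edge_inj.
have Hp : perm_eq (map (@wid_edge n) (sorted_edges G)) (sorted_edges (@wid_edge n @: G)).
  apply: uniq_perm => //; first exact: sorted_edges_uniq.
  move=> e; rewrite sorted_edgesE; apply/mapP/imsetP => [[x Hx ->]|[x Hx ->]];
    exists x => //; by rewrite ?sorted_edgesE in Hx *.
have E : map (act_edge (L s)) (map (@wid_edge n) (sorted_edges G)) =
         map (@wid_edge n) (map (act_edge s) (sorted_edges G)).
  by rewrite -!map_comp; apply: eq_map => e /=; exact: act_L.
have := parity_act (L s) H Hu Hp.
by rewrite E !inv_wid inv_sorted /= => ->.
Qed.

Lemma ltn_max (x : 'I_n.+1) : x != ord_max -> (x < n)%N.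
Proof. rewrite -val_eqE /=; have := ltn_ord x; lia. Qed.

Lemma del_lastK (G : graph n.+1) : isolated G ord_max -> G = @wid_edge n @: del_last G.
Proof.
move=> Hiso; apply/setP => e; apply/idP/imsetP => [He|[e' He' ->]]; last by rewrite inE in He'.
move/forallP: Hiso => /(_ e); rewrite He /= => /andP [h1 h2].
have Ee : wid_edge (Ordinal (ltn_max h1), Ordinal (ltn_max h2)) = e.
  by apply: injective_projections; apply: val_inj.
by exists (Ordinal (ltn_max h1), Ordinal (ltn_max h2)) => //; rewrite inE Ee.
Qed.

Lemma part2 (G : graph n.+1) : wf_graph G -> isolated G ord_max ->
  (forall v, isolated G v -> v = ord_max) -> res (alpha G) = alpha (del_last G).
Proof.
move=> Hwf Hiso Hu.
have GE := del_lastK Hiso.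
move: (del_last G) GE => G' GE; subst G.
have Hwf' := wf_wid Hwf.
apply/ffunP => S; rewrite ffunE !alpha_coef //.
have Hc : (#|Stab (@wid_edge n @: G')|%:R : rat) = #|Stab G'|%:R.
  rewrite -!sum1_card !natr_sum.
  rewrite (eq_bigl (fun σ => im σ (@wid_edge n @: G') == @wid_edge n @: G')); last first.
    by move=> σ; rewrite inE.
  rewrite sum_L //; apply: eq_bigl => s; by rewrite inE.
rewrite Hc sum_L //; congr (_ * _); apply: eq_bigr => s _; exact: sg_L.
Qed.

End Part2.
Theorem proposition2p22 (n : nat) (hn : (0 < n)%N) :
  (* no isolated vertex: restricts to 0 *)
  (forall G : graph n.+1, wf_graph G -> skew_invariant G ->
     (forall v, ~~ isolated G v) -> res (alpha G) = 0) /\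
  (* exactly one isolated vertex (the last one, by the coherent choice of
     representatives): restricts to alpha of the graph with it deleted *)
  (forall G : graph n.+1, wf_graph G -> skew_invariant G ->
     isolated G ord_max -> (forall v, isolated G v -> v = ord_max) ->
     res (alpha G) = alpha (del_last G)) /\
  (* injectivity on the span of such classes *)
  (forall s : seq (rat * graph n.+1),
     all (fun p => [&& wf_graph p.2, skew_invariant p.2, isolated p.2 ord_max &
                    [forall v, isolated p.2 v ==> (v == ord_max)]]) s ->
     res (\sum_(p <- s) p.1 *: alpha p.2) = 0 ->
     \sum_(p <- s) p.1 *: alpha p.2 = 0).
Proof.
split.
  move=> G Hwf _ Hno; apply/ffunP => S; rewrite [LHS]ffunE [RHS]ffunE alpha_coef // big_pred0 ?mulr0 //.
  move=> σ; apply/eqP => H.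
  have := iso_wid_max S; rewrite -H => /iso_bw; exact/negP.
split.
  by move=> G Hwf _ Hiso Hu; apply: part2.
move=> s Hall Hres.
have Hp : forall p, p \in s -> wf_graph p.2 /\ isolated p.2 ord_max.
  by move=> p /(allP Hall) /and4P [? _ ? _].
have coef : forall E, (\sum_(p <- s) p.1 *: alpha p.2) E = \sum_(p <- s) p.1 * alpha p.2 E.
  by move=> E; rewrite sum_ffunE; apply: eq_bigr => p _; rewrite ffunE.
apply/ffunP => E; rewrite coef ffunE.
case: (boolP (wf_graph E && [exists v, isolated E v])) => [/andP [HE /existsP [v Hv]]|HE].
  pose t := tperm v ord_max.
  have Hflip : \sum_(p <- s) p.1 * alpha p.2 (im t E) =
     (-1) ^+ (odd_perm t (+) odd (inv_count (map (act_edge t) (sorted_edges E)))) *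
     \sum_(p <- s) p.1 * alpha p.2 E.
    rewrite big_distrr /=; apply: eq_big_seq => p /Hp [Hw _].
    by rewrite alpha_flip // mulrCA.
  have Hiso : isolated (im t E) ord_max.
    by have := iso_fw t Hv; rewrite /t tpermL.
  have Hz : \sum_(p <- s) p.1 * alpha p.2 (im t E) = 0.
    rewrite -coef (del_lastK Hiso).
    by move: (congr1 (fun f : Lambda n => f (del_last (im t E))) Hres); rewrite /= ffunE [RHS]ffunE.
  by move: Hz; rewrite Hflip => /eqP; rewrite mulf_eq0 signr_eq0 /= => /eqP.
rewrite big1_seq // => p /andP [_ /Hp [Hw Hi]].
rewrite alpha_coef // big_pred0 ?mulr0 // => σ; apply/eqP => H.
move: HE; rewrite -H wf_im //=; apply/negP; rewrite negbK.
by apply/existsP; exists (σ ord_max); apply: iso_fw.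
Qed.
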